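(* Let $p,r$ be positive integers and $q=p+r$. Then the map $\Phi:U_{pq}(\mathbb{H})\to\mathbb{H}^{r\times p}$, $\Phi(Q)=Q_2(Q_0-Q_1)^{-1}$, is a $\mathbf{GL}_p(\mathbb{H})$-invariant harmonic map on $U_{pq}(\mathbb{H})$, equipped with the semi-Euclidean metric (and $\mathbb{H}^{r\times p}$ with its flat metric).
   Context: Elements of $\mathbb{H}^{(p+q)\times p}$ are written $Q=(Q_0;Q_1;Q_2)$ with $Q_0,Q_1\in\mathbb{H}^{p\times p}$, $Q_2\in\mathbb{H}^{r\times p}$. $U_{pq}(\mathbb{H})=\{Q: -Q_0^*Q_0+Q_1^*Q_1+Q_2^*Q_2<0\}$, meaning $x^*(\cdot)x<0$ for every non-zero $x\in\mathbb{H}^p$; on it $Q_0-Q_1$ is invertible. $\mathbf{GL}_p(\mathbb{H})$ acts by right multiplication. The semi-Euclidean metric is $(X,Y)=\mathfrak{Re}\,\mathrm{trace}(X^*\mathrm{diag}(-I_p,I_q)Y)$. Harmonic means vanishing tension field, i.e. every real component of $\Phi$ is annihilated by the Laplace–Beltrami operator of the semi-Euclidean metric. *)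

(* Defs.v *)
From HB Require Import structures.
From mathcomp Require Import all_boot all_order all_algebra.
From mathcomp Require Import all_classical all_reals all_analysis.
From Stdlib Require Import ClassicalEpsilon.

Set Implicit Arguments.
Unset Strict Implicit.
Unset Printing Implicit Defensive.

Import Order.TTheory GRing.Theory Num.Theory.
Import numFieldNormedType.Exports.
Local Open Scope ring_scope.

(* Quaternion matrices.  A matrix X in H^{m x n} is written uniquely as      *)
(*   X = A + B i + C j + D k   with A, B, C, D real m x n matrices;          *)
(* we represent it by the tuple (((A, B), C), D).  This type is a real       *)
(* normed vector space (product of real matrix spaces), which is exactly the *)
(* underlying real vector space of H^{m x n}, with the real coordinates of   *)
(* the quaternion entries as coordinates.                                   *)

Definition hmx (R : realType) (m n : nat) : Type :=
  ('M[R]_(m, n) * 'M[R]_(m, n) * 'M[R]_(m, n) * 'M[R]_(m, n))%type.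

Section Quat.
Variable R : realType.

Definition hre {m n} (X : hmx R m n) : 'M[R]_(m, n) := X.1.1.1.
Definition him {m n} (X : hmx R m n) : 'M[R]_(m, n) := X.1.1.2.
Definition hjm {m n} (X : hmx R m n) : 'M[R]_(m, n) := X.1.2.
Definition hkm {m n} (X : hmx R m n) : 'M[R]_(m, n) := X.2.

Definition hmk {m n} (A B C D : 'M[R]_(m, n)) : hmx R m n := (A, B, C, D).

(* real component number c (0 = real part, 1 = i, 2 = j, 3 = k) *)
Definition hcomp {m n} (c : 'I_4) (X : hmx R m n) : 'M[R]_(m, n) :=
  match val c with
  | 0 => hre X | 1 => him X | 2 => hjm X | _ => hkm X
  end.

Definition hinj {m n} (c : 'I_4) (M : 'M[R]_(m, n)) : hmx R m n :=
  match val c with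
  | 0 => hmk M 0 0 0 | 1 => hmk 0 M 0 0 | 2 => hmk 0 0 M 0 | _ => hmk 0 0 0 M
  end.

(* quaternion matrix product (Hamilton rules ij = k, jk = i, ki = j) *)
Definition hmul {m n k} (X : hmx R m n) (Y : hmx R n k) : hmx R m k :=
  let a := hre X in let b := him X in let c := hjm X in let d := hkm X in
  let a' := hre Y in let b' := him Y in let c' := hjm Y in let d' := hkm Y in
  hmk (a *m a' - b *m b' - c *m c' - d *m d')
      (a *m b' + b *m a' + c *m d' - d *m c')
      (a *m c' - b *m d' + c *m a' + d *m b')
      (a *m d' + b *m c' - c *m b' + d *m a').

Definition hadj {m n} (X : hmx R m n) : hmx R n m :=
  hmk (hre X)^T (- (him X)^T) (- (hjm X)^T) (- (hkm X)^T).

Definition hone n : hmx R n n := hmk 1%:M 0 0 0.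

Definition hinvertible {n} (A : hmx R n n) : Prop :=
  exists B : hmx R n n, hmul A B = hone n /\ hmul B A = hone n.

(* the inverse A^{-1} (chosen classically; meaningful when A is invertible) *)
Definition hinv {n} (A : hmx R n n) : hmx R n n :=
  epsilon (inhabits (0 : hmx R n n))
          (fun B => hmul A B = hone n /\ hmul B A = hone n).

Definition hnegdef {n} (M : hmx R n n) : Prop :=
  forall x : hmx R n 1, x <> 0 -> hre (hmul (hadj x) (hmul M x)) 0 0 < 0.

(* The domain H^{(p+q) x p}, q = p + r, written Q = (Q0; Q1; Q2).            *)

Definition Hdom (p r : nat) : Type := (hmx R p p * hmx R p p * hmx R r p)%type.

Definition Q0 {p r} (Q : Hdom p r) : hmx R p p := Q.1.1.
Definition Q1 {p r} (Q : Hdom p r) : hmx R p p := Q.1.2.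
Definition Q2 {p r} (Q : Hdom p r) : hmx R r p := Q.2.

Definition Upq {p r} : set (Hdom p r) := fun Q =>
  hnegdef (- hmul (hadj (Q0 Q)) (Q0 Q) + hmul (hadj (Q1 Q)) (Q1 Q)
           + hmul (hadj (Q2 Q)) (Q2 Q)).

Definition hact {p r} (Q : Hdom p r) (g : hmx R p p) : Hdom p r :=
  (hmul (Q0 Q) g, hmul (Q1 Q) g, hmul (Q2 Q) g).

Definition Phi {p r} (Q : Hdom p r) : hmx R r p :=
  hmul (Q2 Q) (hinv (Q0 Q - Q1 Q)).

(* Standard real coordinate directions of the domain: the quaternion matrix *)
(* units E = e_c * delta_{ij} placed in block 0, 1 or 2.  They are          *)
(* orthonormal for |(.,.)|, with (E,E) = -1 in block 0 and +1 in blocks 1,2 *)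
Definition dir0 {p r} (c : 'I_4) (i j : 'I_p) : Hdom p r :=
  (hinj c (delta_mx i j), 0, 0).
Definition dir1 {p r} (c : 'I_4) (i j : 'I_p) : Hdom p r :=
  (0, hinj c (delta_mx i j), 0).
Definition dir2 {p r} (c : 'I_4) (i : 'I_r) (j : 'I_p) : Hdom p r :=
  (0, 0, hinj c (delta_mx i j)).

(* Laplace-Beltrami operator of the semi-Euclidean metric                   *)
(*   (X, Y) = Re trace (X^* diag(-I_p, I_q) Y)                              *)
(* in these orthonormal coordinates: sum_k eps_k d^2 f / dx_k^2.            *)
Definition semiLaplacian {p r} (f : Hdom p r -> R) (Q : Hdom p r) : R :=
  - (\sum_(c < 4) \sum_(i < p) \sum_(j < p)
       'D_(dir0 c i j) ('D_(dir0 c i j) f) Q)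
  + (\sum_(c < 4) \sum_(i < p) \sum_(j < p)
       'D_(dir1 c i j) ('D_(dir1 c i j) f) Q)
  + (\sum_(c < 4) \sum_(i < r) \sum_(j < p)
       'D_(dir2 c i j) ('D_(dir2 c i j) f) Q).

(* F : U -> H^{r x p} (flat target) is harmonic on U: every real component *)
(* is twice differentiable on U (differentiable, with differentiable        *)
(* directional derivatives) and is annihilated by the Laplace-Beltrami      *)
(* operator of the semi-Euclidean metric.                                  *)
Definition harmonic_on {p r} (U : set (Hdom p r)) (F : Hdom p r -> hmx R r p)
  : Prop :=
  forall (c : 'I_4) (a : 'I_r) (b : 'I_p),
    let f := fun Q => hcomp c (F Q) a b in
    forall Q, U Q ->
      [/\ differentiable f Q,
          (forall v : Hdom p r, differentiable ('D_v f) Q)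
        & semiLaplacian f Q = 0].

End Quat.

(* Main.v *)
Require Import Defs.
From HB Require Import structures.
From mathcomp Require Import all_boot all_order all_algebra.
From mathcomp Require Import all_classical all_reals all_analysis.
From mathcomp Require Import ring lra.
From Stdlib Require Import ClassicalEpsilon.
Import Order.TTheory GRing.Theory Num.Theory.
Import numFieldNormedType.Exports.
Local Open Scope ring_scope.
Set Implicit Arguments.
Unset Strict Implicit.
Unset Printing Implicit Defensive.

Section QAlg.
Variable R : realType.
Implicit Types m n k : nat.

Lemma hmx_ext m n (X Y : hmx R m n) : hre X = hre Y -> him X = him Y ->
  hjm X = hjm Y -> hkm X = hkm Y -> X = Y.
Proof. by move: X Y => [[[a b] c] d] [[[a' b'] c'] d']; rewrite /hre/him/hjm/hkm/= => -> -> -> ->. Qed.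

Lemma hreD m n (X Y : hmx R m n) : hre (X + Y) = hre X + hre Y. Proof. by []. Qed.
Lemma himD m n (X Y : hmx R m n) : him (X + Y) = him X + him Y. Proof. by []. Qed.
Lemma hjmD m n (X Y : hmx R m n) : hjm (X + Y) = hjm X + hjm Y. Proof. by []. Qed.
Lemma hkmD m n (X Y : hmx R m n) : hkm (X + Y) = hkm X + hkm Y. Proof. by []. Qed.
Lemma hreN m n (X : hmx R m n) : hre (- X) = - hre X. Proof. by []. Qed.
Lemma himN m n (X : hmx R m n) : him (- X) = - him X. Proof. by []. Qed.
Lemma hjmN m n (X : hmx R m n) : hjm (- X) = - hjm X. Proof. by []. Qed.
Lemma hkmN m n (X : hmx R m n) : hkm (- X) = - hkm X. Proof. by []. Qed.
Lemma hre0 m n : hre (0 : hmx R m n) = 0. Proof. by []. Qed.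
Lemma him0 m n : him (0 : hmx R m n) = 0. Proof. by []. Qed.
Lemma hjm0 m n : hjm (0 : hmx R m n) = 0. Proof. by []. Qed.
Lemma hkm0 m n : hkm (0 : hmx R m n) = 0. Proof. by []. Qed.
Lemma hreZ m n (k : R) (X : hmx R m n) : hre (k *: X) = k *: hre X. Proof. by []. Qed.
Lemma himZ m n (k : R) (X : hmx R m n) : him (k *: X) = k *: him X. Proof. by []. Qed.
Lemma hjmZ m n (k : R) (X : hmx R m n) : hjm (k *: X) = k *: hjm X. Proof. by []. Qed.
Lemma hkmZ m n (k : R) (X : hmx R m n) : hkm (k *: X) = k *: hkm X. Proof. by []. Qed.

Definition hE := (hreD, himD, hjmD, hkmD, hreN, himN, hjmN, hkmN, hre0, him0, hjm0, hkm0,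
  hreZ, himZ, hjmZ, hkmZ).

Ltac mxdist := rewrite ?(mulmxDl, mulmxDr, mulmxBl, mulmxBr, mulNmx, mulmxN, mulmxA,
  mul0mx, mulmx0, mul1mx, mulmx1, opprK).
Ltac gen_prods := repeat match goal with |- context [?a *m ?b] => let t := fresh "t" in set t := (a *m b); clearbody t end.
Ltac mxring := apply/matrixP => ? ?; rewrite !mxE; ring.

Ltac hsolve := apply: hmx_ext; rewrite /hmul /hadj /hone /hmk /hre /him /hjm /hkm /=;
  mxdist; gen_prods; mxring.

Lemma hmulA m n k l (X : hmx R m n) (Y : hmx R n k) (Z : hmx R k l) :
  hmul (hmul X Y) Z = hmul X (hmul Y Z).
Proof. hsolve. Qed.

Lemma hmulDl m n k (X Y : hmx R m n) (Z : hmx R n k) :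
  hmul (X + Y) Z = hmul X Z + hmul Y Z.
Proof. hsolve. Qed.

Lemma hmulDr m n k (X : hmx R m n) (Y Z : hmx R n k) :
  hmul X (Y + Z) = hmul X Y + hmul X Z.
Proof. hsolve. Qed.

Lemma hmulNl m n k (X : hmx R m n) (Z : hmx R n k) :
  hmul (- X) Z = - hmul X Z.
Proof. hsolve. Qed.

Lemma hmulNr m n k (X : hmx R m n) (Z : hmx R n k) :
  hmul X (- Z) = - hmul X Z.
Proof. hsolve. Qed.

Lemma hmulZl m n k (c : R) (X : hmx R m n) (Z : hmx R n k) :
  hmul (c *: X) Z = c *: hmul X Z.
Proof. apply: hmx_ext; rewrite /hmul /hmk /hre /him /hjm /hkm /=;
  rewrite -?scalemxAl; gen_prods; mxring. Qed.

Lemma hmul0r m n k (X : hmx R m n) : hmul X (0 : hmx R n k) = 0.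
Proof. hsolve. Qed.

Lemma hmul0l m n k (X : hmx R n k) : hmul (0 : hmx R m n) X = 0.
Proof. hsolve. Qed.

Lemma hmul1l m n (X : hmx R m n) : hmul (hone R m) X = X.
Proof. hsolve. Qed.

Lemma hmul1r m n (X : hmx R m n) : hmul X (hone R n) = X.
Proof. hsolve. Qed.

Lemma trD m n (A B : 'M[R]_(m, n)) : (A + B)^T = A^T + B^T.
Proof. by apply/matrixP=> i j; rewrite !mxE. Qed.
Lemma trN m n (A : 'M[R]_(m, n)) : (- A)^T = - A^T.
Proof. by apply/matrixP=> i j; rewrite !mxE. Qed.

Lemma hadj_mul m n k (X : hmx R m n) (Y : hmx R n k) :
  hadj (hmul X Y) = hmul (hadj Y) (hadj X).
Proof.
apply: hmx_ext; rewrite /hmul /hadj /hmk /hre /him /hjm /hkm /=;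
rewrite ?(trD, trN, trmx_mul); mxdist; gen_prods; mxring.
Qed.

End QAlg.

Section QInv.
Variable R : realType.
Implicit Types m n k : nat.

Ltac mxdist := rewrite ?(mulmxDl, mulmxDr, mulmxBl, mulmxBr, mulNmx, mulmxN, mulmxA,
  mul0mx, mulmx0, mul1mx, mulmx1, opprK).
Ltac gen_prods := repeat match goal with |- context [?a *m ?b] => let t := fresh "t" in set t := (a *m b); clearbody t end.
Ltac mxring := apply/matrixP => ? ?; rewrite !mxE; ring.

Definition stk m n (X : hmx R m n) : 'M[R]_(m + m + (m + m), n) :=
  col_mx (col_mx (hre X) (him X)) (col_mx (hjm X) (hkm X)).
Definition unstk m n (M : 'M[R]_(m + m + (m + m), n)) : hmx R m n :=
  hmk (usubmx (usubmx M)) (dsubmx (usubmx M)) (usubmx (dsubmx M)) (dsubmx (dsubmx M)).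

Lemma stkK m n (X : hmx R m n) : unstk (stk X) = X.
Proof. by apply: hmx_ext; rewrite /unstk /stk /hmk /hre /him /hjm /hkm /= !(col_mxKu, col_mxKd). Qed.

Lemma unstkK m n (M : 'M[R]_(m + m + (m + m), n)) : stk (unstk M) = M.
Proof. by rewrite /unstk /stk /hmk /hre /him /hjm /hkm /= !vsubmxK. Qed.

Lemma stk_inj m n : injective (@stk m n).
Proof. by move=> X Y /(congr1 (@unstk m n)); rewrite !stkK. Qed.

Lemma stk0 m n : stk (0 : hmx R m n) = 0.
Proof. by rewrite /stk /hre /him /hjm /hkm /= !col_mx0. Qed.

Lemma stk_eq0 m n (X : hmx R m n) : stk X = 0 -> X = 0.
Proof. by rewrite -(stk0 m n) => /stk_inj. Qed.

Definition ri m n (X : hmx R m n) := hmk (- him X) (hre X) (hkm X) (- hjm X).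
Definition rj m n (X : hmx R m n) := hmk (- hjm X) (- hkm X) (hre X) (him X).
Definition rk m n (X : hmx R m n) := hmk (- hkm X) (hjm X) (- him X) (hre X).

Definition rho m n (X : hmx R m n) : 'M[R]_(m + m + (m + m), n + n + (n + n)) :=
  row_mx (row_mx (stk X) (stk (ri X))) (row_mx (stk (rj X)) (stk (rk X))).

Lemma rho_stk m n k (X : hmx R m n) (Z : hmx R n k) : rho X *m stk Z = stk (hmul X Z).
Proof.
rewrite /rho {2}/stk !mul_row_col /stk !mul_col_mx !add_col_mx.
rewrite /hmul /ri /rj /rk /hmk /hre /him /hjm /hkm /=.
congr (col_mx (col_mx _ _) (col_mx _ _)); mxdist; gen_prods; mxring.
Qed.

Lemma rho_unit n (A : hmx R n n) :
  (forall x : hmx R n 1, hmul A x = 0 -> x = 0) -> rho A \in unitmx.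
Proof.
move=> inj; rewrite -unitmx_tr -row_free_unit -kermx_eq0; apply/eqP/row_matrixP => i.
rewrite row0; set u := row i _.
have : u *m (rho A)^T = 0 by rewrite /u -row_mul mulmx_ker row0.
move=> /(congr1 trmx); rewrite trmx_mul trmxK trmx0 => h.
have : stk (hmul A (unstk u^T)) = 0 by rewrite -rho_stk unstkK.
move=> /stk_eq0 /inj /(congr1 (@stk _ _)); rewrite unstkK stk0 => /(congr1 trmx).
by rewrite trmxK trmx0.
Qed.

Lemma rho_inj n k (A : hmx R n n) : rho A \in unitmx ->
  forall x : hmx R n k, hmul A x = 0 -> x = 0.
Proof.
move=> uA x Ax; apply: stk_eq0.
by rewrite -(mulKmx uA (stk x)) rho_stk Ax stk0 mulmx0.
Qed.

Definition rinv n (A : hmx R n n) := unstk (invmx (rho A) *m stk (hone R n)).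

Lemma rinvP n (A : hmx R n n) : rho A \in unitmx -> hmul A (rinv A) = hone R n.
Proof.
by move=> uA; apply: stk_inj; rewrite -rho_stk /rinv unstkK mulKVmx.
Qed.

Lemma hinv_spec n (A : hmx R n n) : rho A \in unitmx ->
  [/\ hmul A (hinv A) = hone R n, hmul (hinv A) A = hone R n & hinv A = rinv A].
Proof.
move=> uA; have AY := rinvP uA.
have uY : rho (rinv A) \in unitmx.
  apply: rho_unit => x Yx.
  by rewrite -[x]hmul1l -AY hmulA Yx hmul0r.
have YZ := rinvP uY.
have ZA : rinv (rinv A) = A.
  by rewrite -[RHS]hmul1r -YZ -hmulA AY hmul1l.
have YA : hmul (rinv A) A = hone R n by rewrite -{2}ZA.
have ex : exists B, hmul A B = hone R n /\ hmul B A = hone R n by exists (rinv A).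
have [h1 h2] := epsilon_spec (inhabits (0 : hmx R n n)) _ ex.
rewrite /hinv; set e := epsilon _ _ in h1 h2 *; split => //.
by rewrite -[LHS]hmul1r -AY -hmulA h2 hmul1l.
Qed.

Lemma hinvertibleP n (A : hmx R n n) : hinvertible A ->
  hmul A (hinv A) = hone R n /\ hmul (hinv A) A = hone R n.
Proof. by move=> ex; exact: (epsilon_spec (inhabits (0 : hmx R n n)) _ ex). Qed.

Lemma trtr_ge0 m (M : 'M[R]_(m, 1)) : 0 <= (M^T *m M) 0 0.
Proof. rewrite mxE; apply: sumr_ge0 => k _; rewrite mxE -expr2; exact: sqr_ge0. Qed.

Lemma hnorm_ge0 m (y : hmx R m 1) : 0 <= hre (hmul (hadj y) y) 0 0.
Proof.
rewrite /hmul /hadj /hmk /hre /him /hjm /hkm /= !mulNmx !opprK !mxE.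
by repeat apply: addr_ge0; apply: sumr_ge0 => k _; rewrite mxE -expr2; exact: sqr_ge0.
Qed.

End QInv.

Section Inv.
Variable R : realType.
Local Opaque hmul hadj hone hinv.

Lemma hadj_mulA m n k (x : hmx R m 1) (Y : hmx R n m) (Z : hmx R n k) :
  hmul (hadj x) (hmul (hadj Y) Z) = hmul (hadj (hmul Y x)) Z.
Proof. by rewrite hadj_mul hmulA. Qed.

Lemma conj_form p n (g : hmx R p p) (x : hmx R p 1) (Y : hmx R n p) :
  hmul (hadj x) (hmul (hmul (hadj (hmul Y g)) (hmul Y g)) x) =
  hmul (hadj (hmul g x)) (hmul (hmul (hadj Y) Y) (hmul g x)).
Proof. by rewrite (hadj_mul Y g) (hadj_mul g x) !hmulA. Qed.

Lemma Upq_inj p r (Q : Hdom R p r) : Upq Q ->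
  forall x : hmx R p 1, hmul (Q0 Q - Q1 Q) x = 0 -> x = 0.
Proof.
move=> U x Ax; have [//|x0] := eqVneq x 0.
have e01 : hmul (Q0 Q) x = hmul (Q1 Q) x.
  by apply/subr0_eq; rewrite -hmulNl -hmulDl.
have := U x (elimN eqP x0).
rewrite !(hmulDl, hmulNl, hmulDr, hmulNr) !hmulA.
rewrite (hadj_mulA x (Q0 Q)) (hadj_mulA x (Q1 Q)) (hadj_mulA x (Q2 Q)) e01 addNr add0r.
by rewrite ltNge hnorm_ge0.
Qed.

Lemma Upq_unit p r (Q : Hdom R p r) : Upq Q -> rho (Q0 Q - Q1 Q) \in unitmx.
Proof. by move=> U; apply: rho_unit; exact: Upq_inj. Qed.

Lemma invariance p r (g : hmx R p p) (Q : Hdom R p r) : hinvertible g -> Upq Q ->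
     Upq (hact Q g) /\ Phi (hact Q g) = Phi Q.
Proof.
move=> /hinvertibleP [gg' g'g] U.
have ginj k (x : hmx R p k) : hmul g x = 0 -> x = 0.
  by move=> gx; rewrite -[x]hmul1l -g'g hmulA gx hmul0r.
split.
  move=> x x0.
  have -> : hmul (hadj x) (hmul (- hmul (hadj (Q0 (hact Q g))) (Q0 (hact Q g)) +
      hmul (hadj (Q1 (hact Q g))) (Q1 (hact Q g)) +
      hmul (hadj (Q2 (hact Q g))) (Q2 (hact Q g))) x) =
    hmul (hadj (hmul g x)) (hmul (- hmul (hadj (Q0 Q)) (Q0 Q) + hmul (hadj (Q1 Q)) (Q1 Q)
      + hmul (hadj (Q2 Q)) (Q2 Q)) (hmul g x)).
    rewrite /hact /Q0 /Q1 /Q2 /= !(hmulDl, hmulNl, hmulDr, hmulNr).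
    by rewrite !(conj_form g x).
  by apply: U => /ginj.
set A := Q0 Q - Q1 Q.
have uA := Upq_unit U; have [AA' A'A _] := hinv_spec uA.
have eA : Q0 (hact Q g) - Q1 (hact Q g) = hmul A g.
  by rewrite /hact /Q0 /Q1 /= /A hmulDl hmulNl.
have uAg : rho (hmul A g) \in unitmx.
  apply: rho_unit => x; rewrite hmulA => /(rho_inj uA); exact: ginj.
have [H1 H2 _] := hinv_spec uAg.
have eH : hinv (hmul A g) = hmul (hinv g) (hinv A).
  have e1 : hmul (hmul A g) (hmul (hinv g) (hinv A)) = hone R p.
    by rewrite hmulA -(hmulA g) gg' hmul1l AA'.
  by rewrite -[LHS]hmul1r -e1 -hmulA H2 hmul1l.
Time rewrite /Phi eA eH /hact /Q2 /= -/(Q2 Q) hmulA -(hmulA g) gg' hmul1l.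
by [].
Qed.

End Inv.

Section NearDiff.
Local Open Scope classical_set_scope.
Variables (R : realType) (V : normedModType R).

Lemma near_eq_differentiable (f g : V -> R) (x : V) :
  (\forall y \near x, f y = g y) -> differentiable f x -> differentiable g x.
Proof.
move=> fg df.
have fx : f x = g x := nbhs_singleton fg.
have fg0 : \forall h \near (0 : V), f (h + x) = g (h + x).
  by move: fg; rewrite (near_shift 0) subr0.
have key : g \o shift x = cst (g x) + 'd f x +o_ 0 id.
  apply/eqaddoP; have /eqaddoP lf := diff_locally df.
  move=> eps eps0; have := lf eps eps0.
  apply: filterS2 fg0 => h /= e.
  suff -> : (g \o shift x - (cst (g x) + 'd f x)) h = (f \o shift x - (cst (f x) + 'd f x)) h by [].
  by cbn; rewrite e fx.
have e : 'd g x = 'd f x :> (V -> R).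
    exact: (diff_unique (diff_continuous df) key).
apply/diff_locallyP; rewrite e; split; first exact: diff_continuous.
exact: key.
Qed.

End NearDiff.

Section Rat.
Local Open Scope classical_set_scope.
Variables (R : realType) (V : normedModType R).

Inductive polyf : (V -> R) -> Prop :=
| pf_base f : (forall x, differentiable f x) ->
    (forall v, exists c : R, forall x, 'D_v f x = c) -> polyf f
| pf_add f g : polyf f -> polyf g -> polyf (fun x => f x + g x)
| pf_mul f g : polyf f -> polyf g -> polyf (fun x => f x * g x)
| pf_ext f g : polyf f -> (forall x, f x = g x) -> polyf g.

Lemma pf_cst (c : R) : polyf (fun _ => c).
Proof.
apply: pf_base => [x|v]; first exact: differentiable_cst.
by exists 0 => x; rewrite derive_cst.
Qed.

Lemma polyf_diff f : polyf f -> forall x, differentiable f x.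
Proof.
elim=> {f} [f df _ //|f g _ df _ dg x|f g _ df _ dg x|f g _ df e x].
- exact: differentiableD.
- exact: differentiableM.
- by have -> : g = f by apply/funext => y; rewrite e.
Qed.

Lemma polyf_D f : polyf f -> forall v, polyf ('D_v f).
Proof.
elim=> {f} [f df cf v|f g pf IHf pg IHg v|f g pf IHf pg IHg v|f g pf IHf e v].
- have [c hc] := cf v.
  by apply: (pf_ext (pf_cst c)) => x; rewrite hc.
- apply: (pf_ext (pf_add (IHf v) (IHg v))) => x.
  rewrite (deriveD (diff_derivable (polyf_diff pf x)) (diff_derivable (polyf_diff pg x))).
  by [].
- apply: (pf_ext (pf_add (pf_mul pf (IHg v)) (pf_mul pg (IHf v)))) => x.
  rewrite (deriveM (diff_derivable (polyf_diff pf x)) (diff_derivable (polyf_diff pg x))).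
  by [].
- by have -> : g = f by apply/funext => y; rewrite e.
Qed.

Lemma pf_opp f : polyf f -> polyf (fun x => - f x).
Proof. by move=> pf; apply: (pf_ext (pf_mul (pf_cst (-1)) pf)) => x; rewrite mulN1r. Qed.

Lemma pf_sum (I : Type) (s : seq I) (P : pred I) (F : I -> V -> R) :
  (forall i, polyf (F i)) -> polyf (fun x => \sum_(i <- s | P i) F i x).
Proof.
move=> pF; elim: s => [|i s IH].
  by apply: (pf_ext (pf_cst 0)) => x; rewrite big_nil.
case Pi: (P i).
  by apply: (pf_ext (pf_add (pF i) IH)) => x; rewrite big_cons Pi.
by apply: (pf_ext IH) => x; rewrite big_cons Pi.
Qed.

Lemma pf_prod (I : Type) (s : seq I) (P : pred I) (F : I -> V -> R) :
  (forall i, polyf (F i)) -> polyf (fun x => \prod_(i <- s | P i) F i x).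
Proof.
move=> pF; elim: s => [|i s IH].
  by apply: (pf_ext (pf_cst 1)) => x; rewrite big_nil.
case Pi: (P i).
  by apply: (pf_ext (pf_mul (pF i) IH)) => x; rewrite big_cons Pi.
by apply: (pf_ext IH) => x; rewrite big_cons Pi.
Qed.

Variables (D : V -> R) (pD : polyf D).

Inductive ratf : (V -> R) -> Prop :=
| rf_poly f : polyf f -> ratf f
| rf_inv : ratf (fun x => (D x)^-1)
| rf_add f g : ratf f -> ratf g -> ratf (fun x => f x + g x)
| rf_mul f g : ratf f -> ratf g -> ratf (fun x => f x * g x)
| rf_ext f g : ratf f -> (forall x, D x != 0 -> f x = g x) -> ratf g.

Lemma W_open x : D x != 0 -> \forall y \near x, D y != 0.
Proof.
move=> Dx; have fc := differentiable_continuous (polyf_diff pD x).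
apply: (fc [set y | y != 0]); exists `|D x|; first by rewrite /= normr_gt0.
move=> y; rewrite /= => yltfx.
by apply/eqP => y0; move: yltfx; rewrite y0 subr0 ltxx.
Qed.

Lemma ratf_prop f : ratf f ->
  (forall x, D x != 0 -> differentiable f x) /\ (forall v, ratf ('D_v f)).
Proof.
elim=> {f} [f pf|
  |f g rf [df IHf] rg [dg IHg]|f g rf [df IHf] rg [dg IHg]|f g rf [df IHf] e].
- by split=> [x _|v]; [exact: polyf_diff|exact/rf_poly/polyf_D].
- split=> [x Dx|v]; first exact: differentiableV (polyf_diff pD x) Dx.
  apply: (rf_ext (rf_mul (rf_mul (rf_poly (pf_cst (-1))) (rf_mul rf_inv rf_inv))
     (rf_poly (polyf_D pD v)))) => x Dx.
  rewrite (deriveV Dx (diff_derivable (polyf_diff pD x))).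
  rewrite /GRing.scale /= -exprVn expr2; ring.
- split=> [x Dx|v]; first exact: differentiableD (df x Dx) (dg x Dx).
  apply: (rf_ext (rf_add (IHf v) (IHg v))) => x Dx.
  by rewrite (deriveD (diff_derivable (df x Dx)) (diff_derivable (dg x Dx))).
- split=> [x Dx|v]; first exact: differentiableM (df x Dx) (dg x Dx).
  apply: (rf_ext (rf_add (rf_mul rf (IHg v)) (rf_mul rg (IHf v)))) => x Dx.
  by rewrite (deriveM (diff_derivable (df x Dx)) (diff_derivable (dg x Dx))).
- have near_e x : D x != 0 -> \forall y \near x, f y = g y.
    by move=> Dx; apply: filterS (W_open Dx) => y; exact: e.
  split=> [x Dx|v]; first exact: near_eq_differentiable (near_e x Dx) (df x Dx).
  apply: (rf_ext (IHf v)) => x Dx.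
  exact: near_eq_derive (near_e x Dx).
Qed.

Lemma ratf_diff f x : ratf f -> D x != 0 -> differentiable f x.
Proof. by move=> /ratf_prop [+ _]; apply. Qed.

Lemma ratf_D f v : ratf f -> ratf ('D_v f).
Proof. by move=> /ratf_prop [_]; apply. Qed.

Lemma rf_opp f : ratf f -> ratf (fun x => - f x).
Proof. by move=> pf; apply: (rf_ext (rf_mul (rf_poly (pf_cst (-1))) pf)) => x; rewrite mulN1r. Qed.

Lemma rf_sum (I : Type) (s : seq I) (P : pred I) (F : I -> V -> R) :
  (forall i, ratf (F i)) -> ratf (fun x => \sum_(i <- s | P i) F i x).
Proof.
move=> pF; elim: s => [|i s IH].
  by apply: (rf_ext (rf_poly (pf_cst 0))) => x; rewrite big_nil.
case Pi: (P i).
  by apply: (rf_ext (rf_add (pF i) IH)) => x; rewrite big_cons Pi.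
by apply: (rf_ext IH) => x; rewrite big_cons Pi.
Qed.

End Rat.

Lemma deriveNv (R : realType) (V : normedModType R) (f : V -> R) (y v : V) :
  differentiable f y -> 'D_(- v) f y = - 'D_v f y.
Proof. by move=> df; rewrite !deriveE // linearN. Qed.

Section PM.
Variables (R : realType) (V : normedModType R).

Lemma cont_fst (V1 W1 : normedModType R) : continuous (@fst V1 W1).
Proof. move=> x; exact: cvg_fst. Qed.
Lemma cont_snd (V1 W1 : normedModType R) : continuous (@snd V1 W1).
Proof. move=> x; exact: cvg_snd. Qed.

Lemma pf_lin (f : V -> R) : (forall (a : R) x y, f (a *: x + y) = a * f x + f y) ->
  continuous f -> polyf f.
Proof.
move=> lf cf.
pose fL : {linear V -> R} := HB.pack f (GRing.isLinear.Build _ _ _ _ f lf).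
have cL : continuous fL by exact: cf.
apply: pf_base => [x|v]; first exact: (@linear_differentiable _ _ _ fL x cL).
exists (f v) => x.
rewrite (deriveE _ (@linear_differentiable _ _ _ fL x cL)).
by rewrite (@diff_lin _ _ _ fL x cL).
Qed.

Definition PM m n (F : V -> 'M[R]_(m, n)) := forall i j, polyf (fun x => F x i j).

Lemma PM_lin m n (F : V -> 'M[R]_(m, n)) :
  (forall (a : R) x y, F (a *: x + y) = a *: F x + F y) -> continuous F -> PM F.
Proof.
move=> lF cF i j; apply: (@pf_lin (fun x => F x i j)) => [a x y|]; first by rewrite lF !mxE.
move=> x; exact: (@continuous_comp _ _ _ F (fun M : 'M[R]_(m, n) => M i j) x (cF x) (@coord_continuous _ _ _ i j (F x))).
Qed.

Lemma PM_row m n1 n2 (F : V -> 'M[R]_(m, n1)) (G : V -> 'M[R]_(m, n2)) :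
  PM F -> PM G -> PM (fun x => row_mx (F x) (G x)).
Proof.
move=> pF pG i j.
have -> : (fun x => row_mx (F x) (G x) i j) = (fun x => match fintype.split j with
  inl k => F x i k | inr k => G x i k end) by apply/funext => x; rewrite mxE.
by case: (fintype.split j) => k.
Qed.

Lemma PM_col m1 m2 n (F : V -> 'M[R]_(m1, n)) (G : V -> 'M[R]_(m2, n)) :
  PM F -> PM G -> PM (fun x => col_mx (F x) (G x)).
Proof.
move=> pF pG i j.
have -> : (fun x => col_mx (F x) (G x) i j) = (fun x => match fintype.split i with
  inl k => F x k j | inr k => G x k j end) by apply/funext => x; rewrite mxE.
by case: (fintype.split i) => k.
Qed.

Lemma PM_opp m n (F : V -> 'M[R]_(m, n)) : PM F -> PM (fun x => - F x).
Proof. by move=> pF i j; apply: (pf_ext (pf_opp (pF i j))) => x; rewrite mxE. Qed.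

Lemma PM_row' m n (i0 : 'I_m) (F : V -> 'M[R]_(m, n)) : PM F -> PM (fun x => row' i0 (F x)).
Proof. by move=> pF i j; apply: (pf_ext (pF _ j)) => x; rewrite mxE. Qed.

Lemma PM_col' m n (j0 : 'I_n) (F : V -> 'M[R]_(m, n)) : PM F -> PM (fun x => col' j0 (F x)).
Proof. by move=> pF i j; apply: (pf_ext (pF i _)) => x; rewrite mxE. Qed.

Lemma pf_det n (F : V -> 'M[R]_n) : PM F -> polyf (fun x => \det (F x)).
Proof.
move=> pF; rewrite /determinant.
apply: pf_sum => s; apply: pf_mul; first exact: pf_cst.
by apply: pf_prod => i; exact: pF.
Qed.

Lemma PM_adj n (F : V -> 'M[R]_n) : PM F -> PM (fun x => \adj (F x)).
Proof.
move=> pF i j.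
have -> : (fun x => \adj (F x) i j) = (fun x => cofactor (F x) j i) by apply/funext => x; rewrite mxE.
rewrite /cofactor; apply: pf_mul; first exact: pf_cst.
by apply: pf_det; apply: PM_row'; apply: PM_col'.
Qed.

Variable (D : V -> R).

Definition RM m n (F : V -> 'M[R]_(m, n)) := forall i j, ratf D (fun x => F x i j).

Lemma RM_PM m n (F : V -> 'M[R]_(m, n)) : PM F -> RM F.
Proof. by move=> pF i j; apply: rf_poly. Qed.

Lemma RM_cst m n (M : 'M[R]_(m, n)) : RM (fun _ => M).
Proof. by move=> i j; apply/rf_poly/pf_cst. Qed.

Lemma RM_add m n (F G : V -> 'M[R]_(m, n)) : RM F -> RM G -> RM (fun x => F x + G x).
Proof. by move=> pF pG i j; apply: (rf_ext (rf_add (pF i j) (pG i j))) => x _; rewrite mxE. Qed.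

Lemma RM_opp m n (F : V -> 'M[R]_(m, n)) : RM F -> RM (fun x => - F x).
Proof. by move=> pF i j; apply: (rf_ext (rf_opp (pF i j))) => x _; rewrite mxE. Qed.

Lemma RM_mul m n k (F : V -> 'M[R]_(m, n)) (G : V -> 'M[R]_(n, k)) :
  RM F -> RM G -> RM (fun x => F x *m G x).
Proof.
move=> pF pG i j.
have -> : (fun x => (F x *m G x) i j) = (fun x => \sum_(l < n) F x i l * G x l j).
  by apply/funext => x; rewrite mxE.
exact: (@rf_sum _ _ D _ (index_enum 'I_n) (fun _ => true) (fun l x => F x i l * G x l j)
  (fun l => rf_mul (pF i l) (pG l j))).
Qed.

Lemma RM_usub m1 m2 n (F : V -> 'M[R]_(m1 + m2, n)) : RM F -> RM (fun x => usubmx (F x)).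
Proof. by move=> pF i j; apply: (rf_ext (pF _ j)) => x _; rewrite mxE. Qed.

Lemma RM_dsub m1 m2 n (F : V -> 'M[R]_(m1 + m2, n)) : RM F -> RM (fun x => dsubmx (F x)).
Proof. by move=> pF i j; apply: (rf_ext (pF _ j)) => x _; rewrite mxE. Qed.

Lemma RM_inv n (F : V -> 'M[R]_n) : PM F -> (forall x, D x = \det (F x)) ->
  RM (fun x => invmx (F x)).
Proof.
move=> pF eD i j.
apply: (rf_ext (rf_mul (@rf_inv _ _ D) (RM_PM (PM_adj pF) i j))) => x Dx.
have uF : F x \in unitmx by rewrite unitmxE unitfE -eD.
by rewrite /invmx uF !mxE eD.
Qed.

End PM.

Lemma contC (A B C : topologicalType) (f : A -> B) (g : B -> C) :
  continuous f -> continuous g -> continuous (fun x => g (f x)).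
Proof. by move=> cf cg x; exact: (continuous_comp (cf x) (cg (f x))). Qed.

Ltac contP := lazymatch goal with
 | |- continuous (fun x => fst x) => exact: cont_fst
 | |- continuous (fun x => snd x) => exact: cont_snd
 | |- continuous fst => exact: cont_fst
 | |- continuous snd => exact: cont_snd
 | |- continuous (fun x => fst (@?e x)) => apply: (@contC _ _ _ e fst); [contP | exact: cont_fst]
 | |- continuous (fun x => snd (@?e x)) => apply: (@contC _ _ _ e snd); [contP | exact: cont_snd]
 end.

Section Conc.
Variables (R : realType) (p r : nat).
Local Notation V := (Hdom R p r).

Definition Af (Q : V) : hmx R p p := Q0 Q - Q1 Q.
Definition Dd (Q : V) : R := \det (rho (Af Q)).

Lemma PM_sub m n (F G : V -> 'M[R]_(m, n)) : PM F -> PM G -> PM (fun x => F x - G x).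
Proof. by move=> pF pG i j; apply: (pf_ext (pf_add (pF i j) (pf_opp (pG i j)))) => x; rewrite !mxE. Qed.

Ltac pm_base := apply: PM_lin; [by [] | contP].
Ltac pm_tac := repeat first [apply: PM_row | apply: PM_col | apply: PM_opp | apply: PM_sub | pm_base].

Lemma PM_rho : PM (fun Q : V => rho (Af Q)).
Proof.
rewrite /rho /stk /ri /rj /rk /Af /hmk /hre /him /hjm /hkm /Q0 /Q1 /=.
pm_tac.
Qed.

Lemma pD : polyf (fun Q : V => Dd Q).
Proof. exact: pf_det PM_rho. Qed.


Definition fc (c : 'I_4) (a : 'I_r) (b : 'I_p) (Q : V) : R := hcomp c (Phi Q) a b.

Lemma Phi_W (Q : V) : Dd Q != 0 -> Phi Q = hmul (Q2 Q) (rinv (Af Q)).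
Proof.
move=> DQ; have uA : rho (Af Q) \in unitmx by rewrite unitmxE unitfE.
by have [_ _ <-] := hinv_spec uA.
Qed.

Ltac rm_tac := repeat first [apply: RM_add | apply: RM_opp | apply: RM_mul |
  apply: RM_usub | apply: RM_dsub | apply: RM_cst |
  (apply: RM_inv; [exact: PM_rho | by []]) | (apply: RM_PM; pm_tac)].

Lemma ratf_fc c a b : ratf Dd (fc c a b).
Proof.
apply: (@rf_ext _ _ Dd (fun Q => hcomp c (hmul (Q2 Q) (rinv (Af Q))) a b)); last first.
  by move=> Q DQ; rewrite /fc Phi_W.
suff h : RM Dd (fun Q => hcomp c (hmul (Q2 Q) (rinv (Af Q)))) by exact: h.
case: c => [[|[|[|k]]] hk]; rewrite /hcomp /=;
  rewrite /hmul /rinv /unstk /hmk /hre /him /hjm /hkm /Q2 /=; rm_tac.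
Qed.

End Conc.

Section Lap.
Variables (R : realType) (p r : nat).
Local Notation V := (Hdom R p r).

Lemma derive_lin (f : V -> R) (L : V -> V)
  (Lin : forall (a : R) x y, L (a *: x + y) = a *: L x + L y) (Q v : V) :
  'D_v (fun x => f (L x)) Q = 'D_(L v) f (L Q).
Proof.
rewrite /derive.
have e : (fun h : R => h^-1 *: (((fun x => f (L x)) \o shift Q) (h *: v) - f (L Q))) =
  (fun h : R => h^-1 *: ((f \o shift (L Q)) (h *: L v) - f (L Q))).
  by apply/funext => h /=; rewrite Lin.
by rewrite e.
Qed.

Lemma derive_affine (g : V -> R) (v Q : V) (K : R) :
  (forall h : R, h != 0 -> g (h *: v + Q) - g Q = h * K) -> 'D_v g Q = K.
Proof.
move=> hK; rewrite /derive; apply/lim_near_cst => //=; near=> h.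
rewrite /= hK; last by near: h; exact: nbhs_dnbhs_neq.
rewrite /GRing.scale /= mulrA mulVf ?mul1r //.
by near: h; exact: nbhs_dnbhs_neq.
Unshelve. all: by end_near.
Qed.

Lemma scale_pair (U W : lmodType R) (a : R) (u : U) (w : W) : a *: (u, w) = (a *: u, a *: w).
Proof. by []. Qed.
Lemma add_pair (U W : zmodType) (u u' : U) (w w' : W) : (u, w) + (u', w') = (u + u', w + w').
Proof. by []. Qed.

Lemma opp_pair (U W : zmodType) (u : U) (w : W) : - (u, w) = (- u, - w).
Proof. by []. Qed.

Definition Lm (Q : V) : V := (Af Q, 0, Q2 Q).

Lemma Lm_lin (a : R) (x y : V) : Lm (a *: x + y) = a *: Lm x + Lm y.
Proof.
case: x => [[x0 x1] x2]; case: y => [[y0 y1] y2].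
rewrite /Lm /Af /Q0 /Q1 /Q2 !scale_pair !add_pair /=; congr (_, _, _).
- by congr (_, _, _, _); rewrite scalerBr opprD addrACA.
- by rewrite !scaler0 !addr0.
Qed.

Lemma fc_Lm c a b (Q : V) : fc c a b (Lm Q) = fc c a b Q.
Proof. by rewrite /fc /Phi /Lm /Af /Q0 /Q1 /Q2 /= subr0. Qed.

Lemma Dd_Lm (Q : V) : Dd (Lm Q) = Dd Q.
Proof. by rewrite /Dd /Lm /Af /Q0 /Q1 /= subr0. Qed.

Lemma Lm_dir1 c i j : Lm (dir1 R c i j : V) = - (dir0 R c i j : V).
Proof.
rewrite /Lm /dir1 /dir0 /Af /Q0 /Q1 /Q2 !opp_pair; congr (_, _, _); last by rewrite oppr0.
- change (0 - hinj c (delta_mx i j : 'M[R]_(p, p)) = - hinj c (delta_mx i j : 'M[R]_(p, p))); exact: sub0r.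
- by rewrite oppr0.
Qed.

Lemma Lm_dir0 c i j : Lm (dir0 R c i j : V) = (dir0 R c i j : V).
Proof.
rewrite /Lm /dir0 /Af /Q0 /Q1 /Q2; congr (_, _, _).
change (hinj c (delta_mx i j : 'M[R]_(p, p)) - 0 = hinj c (delta_mx i j : 'M[R]_(p, p))); exact: subr0.
Qed.

Lemma lap01 c a b c' i j (Q : V) : Dd Q != 0 ->
  'D_(dir1 R c' i j) ('D_(dir1 R c' i j) (fc c a b)) Q =
  'D_(dir0 R c' i j) ('D_(dir0 R c' i j) (fc c a b)) Q.
Proof.
move=> DQ; set f := fc c a b; set w : V := dir0 R c' i j.
have fL : f = fun x => f (Lm x) by apply/funext => x; rewrite /f fc_Lm.
have D1 : 'D_(dir1 R c' i j) f = fun x => 'D_(- w) f (Lm x).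
  by apply/funext => x; rewrite {1}fL (derive_lin f Lm_lin) Lm_dir1.
have D0 : 'D_w f = fun x => 'D_w f (Lm x).
  by apply/funext => x; rewrite {1}fL (derive_lin f Lm_lin) Lm_dir0.
have E1 := congr1 (fun F => derive F Q (dir1 R c' i j)) D1.
have E0 := congr1 (fun F => derive F Q w) D0.
simpl in E1, E0.
apply: (etrans E1); apply: esym; apply: (etrans E0); apply: esym.
apply: (etrans (derive_lin ('D_(- w) f) Lm_lin Q (dir1 R c' i j))).
apply: esym; apply: (etrans (derive_lin ('D_w f) Lm_lin Q w)); apply: esym.
rewrite Lm_dir1 [Lm w]Lm_dir0.
have Dy : Dd (Lm Q) != 0 by rewrite Dd_Lm.
set y := Lm Q.
have rf : ratf (@Dd R p r) f := @ratf_fc R p r c a b.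
have ne : \forall z \near y, 'D_(- w) f z = - 'D_w f z.
  by apply: filterS (W_open (pD R p r) Dy) => z Dz; exact: deriveNv (ratf_diff (pD R p r) rf Dz).
have E3 : 'D_(- w) ('D_(- w) f) y = 'D_(- w) (fun z => - 'D_w f z) y := near_eq_derive (- w) ne.
apply: (etrans E3).
have dg := ratf_diff (pD R p r) (ratf_D (pD R p r) w rf) Dy.
have E4 : 'D_(- w) (fun z => - 'D_w f z) y = - 'D_(- w) ('D_w f) y.
  exact: (deriveN (diff_derivable dg)).
apply: (etrans E4).
have E5 : 'D_(- w) ('D_w f) y = - 'D_w ('D_w f) y := deriveNv _ dg.
apply: (etrans (congr1 -%R E5)); exact: opprK.
Qed.

Lemma hcompD c m n (X Y : hmx R m n) : hcomp c (X + Y) = hcomp c X + hcomp c Y.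
Proof. by rewrite /hcomp; case: (val c) => [|[|[|?]]]. Qed.

Lemma hcompZ c m n (k : R) (X : hmx R m n) : hcomp c (k *: X) = k *: hcomp c X.
Proof. by rewrite /hcomp; case: (val c) => [|[|[|?]]]. Qed.

Lemma lap2 c a b c' i j (Q : V) :
  'D_(dir2 R c' i j) ('D_(dir2 R c' i j) (fc c a b)) Q = 0.
Proof.
set w : V := dir2 R c' i j; set E := hinj c' (delta_mx i j : 'M[R]_(r, p)).
have D1 : 'D_w (fc c a b) = fun x => hcomp c (hmul E (hinv (Q0 x - Q1 x))) a b.
  apply/funext => x; apply: derive_affine => h h0.
  rewrite /fc /Phi /w /dir2 /Q0 /Q1 /Q2 /= !scaler0 !add0r.
  by rewrite hmulDl hmulZl hcompD hcompZ !mxE addrK.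
rewrite D1; apply: derive_affine => h h0.
by rewrite /w /dir2 /Q0 /Q1 /= !scaler0 !add0r subrr mulr0.
Qed.

Lemma lap_shape (x y z : R) : y = x -> z = 0 -> - x + y + z = 0.
Proof. by move=> -> ->; rewrite addNr add0r. Qed.

Lemma lap_zero c a b (Q : V) : Dd Q != 0 -> semiLaplacian (fc c a b) Q = 0.
Proof.
move=> DQ; rewrite /semiLaplacian; apply: lap_shape.
  apply: eq_bigr => c0 _; apply: eq_bigr => i _; apply: eq_bigr => j _.
  exact: lap01.
rewrite big1 // => c0 _; rewrite big1 // => i _; rewrite big1 // => j _.
exact: lap2.
Qed.

End Lap.


Theorem lemma6p1 (R : realType) (p r : nat) (hp : (0 < p)%N) (hr : (0 < r)%N) :
  (* GL_p(H)-invariance: the action preserves U and Phi is constant on orbits *)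
  (forall (g : hmx R p p) (Q : Hdom R p r), hinvertible g -> Upq Q ->
     Upq (hact Q g) /\ Phi (hact Q g) = Phi Q)
  (* harmonicity w.r.t. the semi-Euclidean metric *)
  /\ harmonic_on (@Upq R p r) (@Phi R p r).
Proof.
split; first by move=> g Q; exact: invariance.
move=> c a b f Q U.
have DQ : @Dd R p r Q != 0.
  by rewrite /Dd -unitfE -unitmxE; exact: Upq_unit U.
have rf := @ratf_fc R p r c a b.
split.
- exact: (ratf_diff (pD R p r) rf DQ).
- move=> v; exact: (ratf_diff (pD R p r) (ratf_D (pD R p r) v rf) DQ).
- exact: lap_zero.
Qed.
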